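(* The set $T^1(\Sigma)$ of isomorphism types of pruned $\Sigma$-trees is generated as a $(2,1,1,0)$-algebra (under pruned multiplication, $+$, $*$ and the trivial tree as identity constant) by the set $\Sigma$ of base trees.
   Context: Let $\Sigma$ be a set. A $\Sigma$-tree is a finite directed graph whose underlying undirected graph is a tree, edges labelled by elements of $\Sigma$, with distinguished start and end vertices such that there is a (possibly empty) directed path from start to end vertex. The trivial tree has a single vertex. A base tree has exactly one edge, its start vertex being the initial vertex of the edge and its end vertex the terminal vertex; the base tree labelled $a$ is identified with $a\in\Sigma$. A morphism $X\to Y$ maps vertices to vertices and edges to edges, preserving initial vertex, terminal vertex and label of each edge, and mapping start/end vertex to start/end vertex; isomorphisms are morphisms bijective on vertices and edges. A retraction is an idempotent morphism $X\to X$, its image a retract; $X$ is pruned if it admits no non-identity retraction. Every tree $X$ has a pruned retract, unique up to isomorphism, with isomorphism type $\overline{X}$. Unpruned operations: $X\times Y$ identifies the end vertex of (a copy of) $X$ with the start vertex of (a disjoint copy of) $Y$, start vertex that of $X$, end vertex that of $Y$; $X^{(+)}$ is $X$ with end vertex moved to the start vertex; $X^{( * )}$ is $X$ with start vertex moved to the end vertex. Pruned operations: $XY=\overline{X\times Y}$, $X^+=\overline{X^{(+)}}$, $X^*=\overline{X^{( * )}}$. *)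

(* Defs.v *)
From mathcomp Require Import all_boot.
Set Implicit Arguments. Unset Strict Implicit. Unset Printing Implicit Defensive.

(* A Sigma-labelled finite directed (multi)graph with distinguished start and
   end vertices. *)
Record stree (Sigma : Type) := STree {
  sV : finType;
  sE : finType;
  ssrc : sE -> sV;
  stgt : sE -> sV;
  slab : sE -> Sigma;
  sst : sV;
  sen : sV }.
Arguments STree {Sigma} sV sE ssrc stgt slab sst sen.
Arguments sV {Sigma}. Arguments sE {Sigma}.
Arguments ssrc {Sigma s}. Arguments stgt {Sigma s}. Arguments slab {Sigma s}.
Arguments sst {Sigma}. Arguments sen {Sigma}.

Section Trees.
Variable Sigma : Type.
Implicit Types X Y Z W : stree Sigma.

Definition uadj X : rel (sV X) := fun u v =>
  [exists e, ((ssrc e == u) && (stgt e == v)) || ((ssrc e == v) && (stgt e == u))].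
Definition dadj X : rel (sV X) := fun u v => [exists e, (ssrc e == u) && (stgt e == v)].

(* The underlying undirected (multi)graph is a tree: connected, and
   #edges = #vertices - 1 (equivalently: connected and acyclic); moreover
   there is a (possibly empty) directed path from start to end vertex. *)
Definition is_tree X : Prop :=
  [/\ (forall u v : sV X, connect (@uadj X) u v),
      #|sE X| + 1 = #|sV X|
    & connect (@dadj X) (sst X) (sen X)].

Definition is_morph X Y (fV : sV X -> sV Y) (fE : sE X -> sE Y) : Prop :=
  [/\ (forall e, ssrc (fE e) = fV (ssrc e)),
      (forall e, stgt (fE e) = fV (stgt e)),
      (forall e, slab (fE e) = slab e),
      fV (sst X) = sst Y
    & fV (sen X) = sen Y].

Definition iso X Y : Prop :=
  exists (fV : sV X -> sV Y) (fE : sE X -> sE Y),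
    [/\ is_morph fV fE, bijective fV & bijective fE].

Record retraction X := Retraction {
  rV : sV X -> sV X;
  rE : sE X -> sE X;
  r_morph : is_morph rV rE;
  rV_idem : forall v, rV (rV v) = rV v;
  rE_idem : forall e, rE (rE e) = rE e }.

Definition pruned X : Prop :=
  forall r : retraction X, (forall v, rV r v = v) /\ (forall e, rE r e = e).

Section Image.
Variables (X : stree Sigma) (r : retraction X).
Definition imV : finType := {v : sV X | rV r v == v}.
Definition imE : finType := {e : sE X | rE r e == e}.

Lemma im_src_proof (e : imE) : rV r (ssrc (val e)) == ssrc (val e).
Proof.
case: e => e /= /eqP He; case: (r_morph r) => Hs _ _ _ _.
by rewrite -Hs He.
Qed.
Lemma im_tgt_proof (e : imE) : rV r (stgt (val e)) == stgt (val e).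
Proof.
case: e => e /= /eqP He; case: (r_morph r) => _ Ht _ _ _.
by rewrite -Ht He.
Qed.
Lemma im_st_proof : rV r (sst X) == sst X.
Proof. by case: (r_morph r) => _ _ _ -> _. Qed.
Lemma im_en_proof : rV r (sen X) == sen X.
Proof. by case: (r_morph r) => _ _ _ _ ->. Qed.

Definition retract_tree : stree Sigma :=
  STree imV imE
    (fun e => exist _ (ssrc (val e)) (im_src_proof e))
    (fun e => exist _ (stgt (val e)) (im_tgt_proof e))
    (fun e => slab (val e))
    (exist _ (sst X) im_st_proof)
    (exist _ (sen X) im_en_proof).
End Image.

(* X is (isomorphic to) a pruned retract of W, i.e. the isomorphism type
   of X is \overline{W} *)
Definition pruned_retract_of X W : Prop :=
  pruned X /\ exists r : retraction W, iso X (retract_tree r).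

Definition base_tree (a : Sigma) : stree Sigma :=
  STree (bool : finType) (unit : finType) (fun _ => false) (fun _ => true)
    (fun _ => a) false true.

Definition trivial_tree : stree Sigma :=
  STree (unit : finType) (void : finType) (fun e => match e with end)
    (fun e => match e with end) (fun e => match e with end) tt tt.

(* unpruned product X x Y: glue end vertex of X to start vertex of Y *)
Section Prod.
Variables X Y : stree Sigma.
Definition prodV : finType := (sV X + {y : sV Y | y != sst Y})%type.
Definition injY (y : sV Y) : prodV :=
  match insub y with Some y' => inr y' | None => inl (sen X) end.
Definition prod_tree : stree Sigma :=
  STree prodV ((sE X + sE Y)%type : finType)
    (fun e => match e with inl e => inl (ssrc e) | inr e => injY (ssrc e) end)
    (fun e => match e with inl e => inl (stgt e) | inr e => injY (stgt e) end)
    (fun e => match e with inl e => slab e | inr e => slab e end)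
    (inl (sst X)) (injY (sen Y)).
End Prod.

Definition plus_tree X : stree Sigma :=
  STree (sV X) (sE X) ssrc stgt slab (sst X) (sst X).
Definition star_tree X : stree Sigma :=
  STree (sV X) (sE X) ssrc stgt slab (sen X) (sen X).

(* Closed under isomorphism, since elements are iso types. *)
Inductive generated : stree Sigma -> Prop :=
| gen_base (a : Sigma) X : iso X (base_tree a) -> generated X
| gen_one X : iso X trivial_tree -> generated X
| gen_mul Y Z X : generated Y -> generated Z ->
    pruned_retract_of X (prod_tree Y Z) -> generated X
| gen_plus Y X : generated Y -> pruned_retract_of X (plus_tree Y) -> generated X
| gen_star Y X : generated Y -> pruned_retract_of X (star_tree Y) -> generated X.

End Trees.

(* Main.v *)
Require Import Defs.
From mathcomp Require Import all_boot zify.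
Set Implicit Arguments. Unset Strict Implicit. Unset Printing Implicit Defensive.

Lemma connect_rmap (T T' : finType) (R : rel T) (R' : rel T') (S : pred T) (h : T -> T') x y :
  (forall u v, R u v -> S u -> S v /\ R' (h u) (h v)) -> connect R x y -> S x ->
  connect R' (h x) (h y).
Proof.
move=> HS /connectP [p Hp ->]; elim: p x Hp => [|z p IH] x //= /andP [Hxz Hp] Sx.
case: (HS _ _ Hxz Sx) => Sz R'xz.
exact: connect_trans (connect1 R'xz) (IH _ Hp Sz).
Qed.

Lemma connect_fwd (T : finType) (R : rel T) (S : pred T) x y :
  (forall u v, R u v -> S u -> S v) -> connect R x y -> S x -> S y.
Proof.
move=> HS /connectP [p Hp ->]; elim: p x Hp => [|z p IH] x //= /andP [Hxz Hp] Sx.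
exact: IH Hp (HS _ _ Hxz Sx).
Qed.

Section Proof.
Variable Sigma : Type.
Implicit Types X Y Z : stree Sigma.

Definition adjQ X (Q : {set sE X}) : rel (sV X) := fun u v =>
  [exists f in Q, ((ssrc f == u) && (stgt f == v)) || ((ssrc f == v) && (stgt f == u))].
Definition dadjQ X (Q : {set sE X}) : rel (sV X) := fun u v =>
  [exists f in Q, (ssrc f == u) && (stgt f == v)].
Definition comp X (Q : {set sE X}) x := [set y | connect (@adjQ X Q) x y].

Lemma adjQ_sym X (Q : {set sE X}) : symmetric (adjQ Q).
Proof.
move=> u v; apply/existsP/existsP => -[f /andP [fQ H]]; exists f;
  by rewrite fQ orbC.
Qed.

Lemma adjQP X (Q : {set sE X}) u v :
  reflect (exists2 f, f \in Q & ((ssrc f == u) && (stgt f == v)) || ((ssrc f == v) && (stgt f == u)))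
          (adjQ Q u v).
Proof.
apply: (iffP existsP) => [[f /andP [fQ H]]|[f fQ H]]; exists f => //; exact/andP.
Qed.

Lemma uadj_adjQ X u v : uadj u v = adjQ [set: sE X] u v.
Proof.
by apply/existsP/existsP => -[f H]; exists f; rewrite ?in_setT in H *.
Qed.

Lemma comp_card X (Q : {set sE X}) x :
  #|comp Q x| <= #|[set f in Q | ssrc f \in comp Q x]| + 1.
Proof.
have [n] := ubnP #|Q|; elim: n Q x => [Q x|n IH Q x HQn]; first by rewrite ltn0.
have symQ : forall Q', connect_sym (@adjQ X Q') := fun Q' => sym_connect_sym (adjQ_sym Q').
set C := comp Q x.
case: (pickP [pred f in Q | ssrc f \in C]) => [f /andP [fQ fC] | none]; last first.
  have -> : C = [set x]; last by rewrite cards1 leq_addl.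
  apply/setP => y; rewrite inE /C inE; apply/idP/idP => [Hy|/eqP ->]; last exact: connect0.
  case/connectP: Hy => [[|z p]] /= Hp ->; first by [].
  case/andP: Hp => /adjQP [g gQ Hg] _; exfalso.
  have zC : z \in C by rewrite inE; apply: connect1; apply/adjQP; exists g.
  case/orP: Hg => /andP [/eqP Hs _].
    by move: (none g); rewrite /= gQ Hs inE connect0.
  by move: (none g); rewrite /= gQ Hs zC.
set a := ssrc f; set b := stgt f.
set Q' := Q :\ f.
have HQ' : #|Q'| < n.
  by move: HQn (cardsD1 f Q); rewrite fQ /= -/Q'; lia.
have Q'Q : forall u v, adjQ Q' u v -> adjQ Q u v.
  by move=> u v /adjQP [g]; rewrite inE => /andP [_ gQ] H; apply/adjQP; exists g.
have sub : forall y z, y \in C -> connect (adjQ Q') y z -> z \in C.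
  move=> y z; rewrite !inE => Hy Hz; apply: connect_trans Hy _.
  by apply: (@connect_rmap _ _ _ _ predT id) Hz _ => // u v /Q'Q.
have aC : a \in C by [].
have bC : b \in C.
  move: aC; rewrite !inE => Ha; apply: connect_trans Ha (connect1 _).
  by apply/adjQP; exists f; rewrite ?eqxx.
set Ca := comp Q' a; set Cb := comp Q' b.
have CU : C \subset Ca :|: Cb.
  apply/subsetP => y yC.
  have : connect (adjQ Q) a y.
    by move: aC yC; rewrite !inE => Ha Hy; apply: connect_trans _ Hy; rewrite symQ.
  move=> Hay; apply: (@connect_fwd _ (adjQ Q) (fun z => z \in Ca :|: Cb) a y) Hay _; last first.
    by rewrite !inE connect0.
  move=> u v /adjQP [g gQ Hg]; rewrite !inE => Hu.
  case: (eqVneq g f) => [gf|gf].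
    subst g; case/orP: Hg => /andP [/eqP H1 /eqP H2].
      by rewrite -H2 -/b connect0 orbT.
    by rewrite -H1 -/a connect0.
  have Huv : adjQ Q' u v by apply/adjQP; exists g; rewrite // /Q' !inE gf gQ.
  by case/orP: Hu => Hu; [rewrite (connect_trans Hu (connect1 Huv))|rewrite (connect_trans Hu (connect1 Huv)) orbT].
set EC := [set g in Q | ssrc g \in C].
have fEC : f \in EC by rewrite inE fQ.
have Esub : forall c, c \in C -> [set g in Q' | ssrc g \in comp Q' c] \subset EC :\ f.
  move=> c cC; apply/subsetP => g; rewrite !inE => /andP [/andP [gf gQ] Hg].
  by rewrite gf gQ /=; have := sub _ _ cC Hg; rewrite inE.
have IHa := IH Q' a HQ'; have IHb := IH Q' b HQ'.
have Ea := Esub a aC; have Eb := Esub b bC.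
rewrite -/Ca in IHa Ea; rewrite -/Cb in IHb Eb.
have C1 := subset_leq_card CU.
case: (boolP (b \in Ca)) => bCa.
  have CaC : Ca :|: Cb \subset Ca.
    apply/subsetP => y; rewrite !inE => /orP [//|Hy].
    by move: bCa Hy; rewrite /Ca /Cb /comp !inE => H1 H2; exact: connect_trans H1 H2.
  have := subset_leq_card CaC; have := subset_leq_card Ea.
  have := cardsD1 f EC; rewrite fEC; clear -C1 IHa; lia.
have disj : Ca :&: Cb = set0.
  apply/setP => y; rewrite !inE; apply/negbTE/negP => /andP [H1 H2].
  by move: bCa; rewrite inE (connect_trans H1) // symQ.
have disjE : [set g in Q' | ssrc g \in Ca] :&: [set g in Q' | ssrc g \in Cb] = set0.
  apply/setP => g; rewrite !inE; apply/negbTE/negP => /andP [/andP [_ H1] /andP [_ H2]].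
  by move/setP: disj => /(_ (ssrc g)); rewrite !inE H1 H2.
have EU : [set g in Q' | ssrc g \in Ca] :|: [set g in Q' | ssrc g \in Cb] \subset EC :\ f.
  by rewrite subUset Ea Eb.
have := subset_leq_card EU; have := cardsUI [set g in Q' | ssrc g \in Ca] [set g in Q' | ssrc g \in Cb].
have := cardsUI Ca Cb; rewrite disjE disj !cards0.
have := cardsD1 f EC; rewrite fEC; clear -C1 IHa IHb; lia.
Qed.


Lemma uadj_sym X : symmetric (@uadj _ X).
Proof. by move=> u v; rewrite !uadj_adjQ; exact: adjQ_sym. Qed.

Section Sub.
Variables (X : stree Sigma) (P : {set sV X}) (Q : {set sE X}) (p q : sV X) (hp : p \in P).
Definition subV : finType := {v : sV X | v \in P}.
Definition subE : finType := {f : sE X | f \in Q}.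
Definition p0 : subV := exist _ p hp.
Definition sub_tree : stree Sigma :=
  STree subV subE (fun f => insubd p0 (ssrc (val f))) (fun f => insubd p0 (stgt (val f)))
    (fun f => slab (val f)) p0 (insubd p0 q).

Hypothesis HQ : forall f, f \in Q -> (ssrc f \in P) && (stgt f \in P).
Hypothesis hq : q \in P.

Lemma sub_src (f : sE sub_tree) : val (ssrc f) = ssrc (val f).
Proof. case: f => f fQ /=; rewrite insubdK //; by case/andP: (HQ fQ). Qed.
Lemma sub_tgt (f : sE sub_tree) : val (stgt f) = stgt (val f).
Proof. case: f => f fQ /=; rewrite insubdK //; by case/andP: (HQ fQ). Qed.

Lemma sub_conn r : r \in P -> (forall v, v \in P -> connect (adjQ Q) r v) ->
  forall u v : sV sub_tree, connect (@uadj _ sub_tree) u v.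
Proof.
move=> rP Hr.
have key : forall v : sV sub_tree, connect (@uadj _ sub_tree) (insubd p0 r) v.
  move=> v; rewrite -(valKd p0 v).
  apply: (@connect_rmap _ _ (adjQ Q) _ (fun z => z \in P) (insubd p0)) (Hr _ (valP v)) rP.
  move=> x y /adjQP [g gQ Hg] xP.
  case/andP: (HQ gQ) => sP tP.
  case/orP: Hg => /andP [/eqP ? /eqP ?]; subst x y; split => //;
    apply/existsP; exists (exist _ g gQ) => /=; by rewrite !eqxx ?orbT.
have symU : connect_sym (@uadj _ sub_tree) := sym_connect_sym (@uadj_sym _).
move=> u v; apply: connect_trans (key v); rewrite symU; exact: key.
Qed.

Lemma sub_dpath : connect (dadjQ Q) p q ->
  connect (@dadj _ sub_tree) (sst sub_tree) (sen sub_tree).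
Proof.
move=> H.
have -> : sst sub_tree = insubd p0 p by apply: val_inj; rewrite /= insubdK.
apply: (@connect_rmap _ _ (dadjQ Q) _ (fun z => z \in P) (insubd p0)) H hp.
move=> x y /existsP [g /andP [gQ /andP [/eqP <- /eqP <-]]] _.
case/andP: (HQ gQ) => sP tP; split => //.
by apply/existsP; exists (exist _ g gQ); rewrite /= !eqxx.
Qed.

Lemma sub_cardV : #|sV sub_tree| = #|P|.
Proof. by rewrite card_sig; apply: eq_card. Qed.
Lemma sub_cardE : #|sE sub_tree| = #|Q|.
Proof. by rewrite card_sig; apply: eq_card. Qed.

Hypothesis Hbd : forall f, f \notin Q -> forall v, v \in P ->
  (ssrc f == v) || (stgt f == v) -> (v == p) || (v == q).
Hypothesis Hst : sst X \in P -> (sst X == p) || (sst X == q).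
Hypothesis Hen : sen X \in P -> (sen X == p) || (sen X == q).

Lemma sub_pruned : pruned X -> pruned sub_tree.
Proof.
move=> prX r.
pose fV (v : sV X) := if insub v is Some v1 then val (rV r v1) else v.
pose fE (f : sE X) := if insub f is Some f1 then val (rE r f1) else f.
have [Hs Ht Hl Hst' Hen'] := r_morph r.
have fVval : forall w : subV, fV (val w) = val (rV r w) by move=> w; rewrite /fV valK.
have fVP : forall v, v \in P -> fV v = val (rV r (insubd p0 v)).
  by move=> v vP; rewrite -fVval insubdK.
have fVfix : forall v, (v \in P -> (v == p) || (v == q)) -> fV v = v.
  move=> v Hv; case: (boolP (v \in P)) => vP; last by rewrite /fV insubF //; apply/negbTE.
  case/orP: (Hv vP) => /eqP ->.
    rewrite fVP //; have -> : insubd p0 p = p0 by apply: val_inj; rewrite insubdK.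
    by rewrite Hst'.
  by rewrite fVP // Hen' /= insubdK.
have Hm : is_morph fV fE.
  split.
  - move=> f; rewrite /fE; case: insubP => [f1 _ <-|nQ].
      by case/andP: (HQ (valP f1)) => sP tP; rewrite -(sub_src (rE r f1)) Hs fVP.
    apply/esym/fVfix => vP; apply: (Hbd nQ vP); by rewrite eqxx.
  - move=> f; rewrite /fE; case: insubP => [f1 _ <-|nQ].
      by case/andP: (HQ (valP f1)) => sP tP; rewrite -(sub_tgt (rE r f1)) Ht fVP.
    apply/esym/fVfix => vP; apply: (Hbd nQ vP); by rewrite eqxx orbT.
  - move=> f; rewrite /fE; case: insubP => [f1 _ <-|nQ] //.
    exact: Hl.
  - exact: fVfix.
  - exact: fVfix.
have HiV : forall v, fV (fV v) = fV v.
  move=> v; case: (boolP (v \in P)) => vP.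
    by rewrite (fVP _ vP) fVval rV_idem.
  have fVn : fV v = v by apply: fVfix => H; rewrite H in vP.
  by rewrite !fVn.
have HiE : forall f, fE (fE f) = fE f.
  have fEval : forall w : subE, fE (val w) = val (rE r w) by move=> w; rewrite /fE valK.
  move=> f; case: (boolP (f \in Q)) => fQ.
    have -> : f = val (exist (fun g => g \in Q) f fQ) by [].
    by rewrite fEval fEval rE_idem.
  have fEn : fE f = f by rewrite /fE insubF //; apply/negbTE.
  by rewrite !fEn.
have [idV idE] := prX (@Retraction _ X fV fE Hm HiV HiE).
split=> [w|g]; apply: val_inj.
  by rewrite -fVval; exact: (idV (val w)).
by move: (idE (val g)); rewrite /= /fE valK.
Qed.
End Sub.
Arguments sub_tree : clear implicits.

Lemma iso_sym X Y : iso X Y -> iso Y X.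
Proof.
case=> fV [fE [[Hs Ht Hl Hst Hen] [gV gf fg] [gE gfE fgE]]].
exists gV, gE; split; [|by exists fV|by exists fE].
split=> [e|e|e||].
- by apply: (can_inj gf); rewrite -Hs !fgE fg.
- by apply: (can_inj gf); rewrite -Ht !fgE fg.
- by rewrite -[in RHS](fgE e) Hl.
- by rewrite -Hst gf.
- by rewrite -Hen gf.
Qed.

Lemma iso_trans X Y Z : iso X Y -> iso Y Z -> iso X Z.
Proof.
case=> fV [fE [[Hs Ht Hl Hst Hen] bV bE]].
case=> gV [gE [[Hs' Ht' Hl' Hst' Hen'] bV' bE']].
exists (gV \o fV), (gE \o fE); split; last 2 first.
- exact: bij_comp.
- exact: bij_comp.
split=> [e|e|e||] /=.
- by rewrite Hs' Hs.
- by rewrite Ht' Ht.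
- by rewrite Hl' Hl.
- by rewrite Hst Hst'.
- by rewrite Hen Hen'.
Qed.

Lemma iso_inj X Y (fV : sV X -> sV Y) (fE : sE X -> sE Y) : is_morph fV fE ->
  injective fV -> injective fE ->
  #|sV Y| <= #|sV X| -> #|sE Y| <= #|sE X| -> iso X Y.
Proof. move=> Hm iV iE cV cE; exists fV, fE; split => //; exact: inj_card_bij. Qed.

Lemma morph_id X : is_morph (@id (sV X)) (@id (sE X)).
Proof. by []. Qed.

Definition id_retr X : retraction X :=
  @Retraction _ X id id (morph_id X) (fun _ => erefl) (fun _ => erefl).


Lemma iso_retr X : iso X (retract_tree (id_retr X)).
Proof.
refine (@iso_inj X (retract_tree (id_retr X)) (fun v => exist _ v (eqxx v))
  (fun e => exist _ e (eqxx e)) _ _ _ _ _).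
- by split=> * //; apply: val_inj.
- by move=> u v /(congr1 val).
- by move=> u v /(congr1 val).
- exact: (leq_card val val_inj).
- exact: (leq_card val val_inj).
Qed.

Lemma gen_mul_iso X Y Z : generated Y -> generated Z -> pruned X ->
  iso X (prod_tree Y Z) -> generated X.
Proof.
move=> gY gZ pX H; apply: (gen_mul gY gZ); split=> //.
by exists (id_retr _); exact: iso_trans H (iso_retr _).
Qed.
Lemma gen_plus_iso X Y : generated Y -> pruned X -> iso X (plus_tree Y) -> generated X.
Proof.
move=> gY pX H; apply: (gen_plus gY); split=> //.
by exists (id_retr _); exact: iso_trans H (iso_retr _).
Qed.
Lemma gen_star_iso X Y : generated Y -> pruned X -> iso X (star_tree Y) -> generated X.
Proof.
move=> gY pX H; apply: (gen_star gY); split=> //.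
by exists (id_retr _); exact: iso_trans H (iso_retr _).
Qed.


Lemma sv_insubd (T : finType) (P : pred T) (u0 : {x | P x}) x : P x -> sval (insubd u0 x) = x.
Proof. exact: insubdK. Qed.

Section Cut.
Variables (X : stree Sigma) (P1 P2 : {set sV X}) (Q1 : {set sE X}) (c : sV X).
Hypotheses (hs : sst X \in P1) (ht : sen X \in P2) (c1 : c \in P1) (c2 : c \in P2).
Hypothesis cover : forall v, (v \in P1) || (v \in P2).
Hypothesis inter : forall v, v \in P1 -> v \in P2 -> v = c.
Hypothesis HQ1 : forall f, f \in Q1 -> (ssrc f \in P1) && (stgt f \in P1).
Hypothesis HQ2 : forall f, f \in ~: Q1 -> (ssrc f \in P2) && (stgt f \in P2).

Definition X1 := sub_tree X P1 Q1 (sst X) c hs.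
Definition X2 := sub_tree X P2 (~: Q1) c (sen X) c2.

Lemma cut_iso : iso X (prod_tree X1 X2).
Proof.
apply: iso_sym.
pose gV (z : prodV X1 X2) : sV X := match z with inl v => val v | inr y => val (val y) end.
pose gE (z : sE (prod_tree X1 X2)) : sE X := match z with inl f => val f | inr f => val f end.
have ginj : forall y : sV X2, gV (injY X1 y) = val y.
  move=> y; rewrite /injY; case: insubP => [y' _ <-|] //=.
  by rewrite negbK => /eqP -> /=; rewrite insubdK.
refine (@iso_inj (prod_tree X1 X2) X gV gE _ _ _ _ _).
- split.
  + case=> f /=; [case/andP: (HQ1 (valP f)) | rewrite ginj; case/andP: (HQ2 (valP f))];
      by move=> sP tP; rewrite ?insubdK ?sv_insubd.
  + case=> f /=; [case/andP: (HQ1 (valP f)) | rewrite ginj; case/andP: (HQ2 (valP f))];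
      by move=> sP tP; rewrite ?insubdK ?sv_insubd.
  + by case.
  + by [].
  + by rewrite /= ginj /= insubdK.
- have key : forall (u : sV X1) (y : {y : sV X2 | y != sst X2}), gV (inl u) <> gV (inr y).
    move=> u y H; have H' : val u = val (val y) := H.
    have Hc : val (val y) = c.
      by rewrite -H'; apply: inter (valP u) _; rewrite H'; exact: (valP (val y)).
    by move: (valP y) => /eqP; apply; apply: val_inj; rewrite Hc.
  case=> [u|y] [u'|y'] H.
  + by congr inl; apply: val_inj.
  + by case: (key _ _ H).
  + by case: (key _ _ (esym H)).
  + by congr inr; apply: val_inj; apply: val_inj.
- case=> [f|f] [f'|f'] H; have H' : val f = val f' := H.
  + by congr inl; apply: val_inj.
  + by have := valP f'; rewrite inE -H' (valP f).
  + by have := valP f; rewrite inE H' (valP f').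
  + by congr inr; apply: val_inj.
- have e1 : #|sV X1| = #|P1| by exact: sub_cardV.
  have e2 : #|{: {y : sV X2 | y != sst X2}}| = #|P2|.-1.
    by rewrite card_sig (eq_card (B:=predC1 (sst X2))) // cardC1 sub_cardV.
  rewrite card_sum e1 e2.
  have U : P1 :|: P2 = setT by apply/setP => v; rewrite !inE cover.
  have I : P1 :&: P2 = [set c].
    apply/setP => v; rewrite !inE; apply/idP/idP => [/andP [H1 H2]|/eqP ->]; last by rewrite c1 c2.
    by rewrite (inter H1 H2).
  have := cardsUI P1 P2; rewrite U I cards1 cardsT.
  have : 0 < #|P2| by apply/card_gt0P; exists c.
  lia.
- rewrite card_sum (sub_cardE Q1) (sub_cardE (~: Q1)) cardsC //.
Qed.

Lemma cut_pruned1 : pruned X -> pruned X1.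
Proof.
apply: (sub_pruned HQ1 c1).
- move=> f nf v vP Hv; have := HQ2 (f:=f); rewrite inE nf => /(_ isT) /andP [H1 H2].
  by case/orP: Hv => /eqP Hv; subst v; rewrite (inter vP) ?eqxx ?orbT.
- by rewrite eqxx.
- by move=> H; rewrite (inter H ht) eqxx orbT.
Qed.

Lemma cut_pruned2 : pruned X -> pruned X2.
Proof.
apply: (sub_pruned HQ2 ht).
- move=> f nf v vP Hv; have := HQ1 (f:=f); rewrite inE negbK in nf; move=> /(_ nf) /andP [H1 H2].
  by case/orP: Hv => /eqP Hv; subst v; rewrite (inter _ vP) ?eqxx.
- by move=> H; rewrite (inter hs H) eqxx.
- by rewrite eqxx orbT.
Qed.
End Cut.


Lemma comp_closed X (Q : {set sE X}) x u v : u \in comp Q x -> adjQ Q u v -> v \in comp Q x.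
Proof. rewrite !inE => Hu Huv; exact: connect_trans Hu (connect1 Huv). Qed.

Lemma adjQ_mono X (Q Q' : {set sE X}) : {subset Q <= Q'} ->
  forall u v, connect (adjQ Q) u v -> connect (adjQ Q') u v.
Proof.
move=> HQ u v H; apply: (@connect_rmap _ _ _ _ predT id) H _ => // x y /adjQP [g gQ Hg] _.
by split=> //; apply/adjQP; exists g => //; apply: HQ.
Qed.

Lemma dadjQ_mono X (Q Q' : {set sE X}) : {subset Q <= Q'} ->
  forall u v, connect (dadjQ Q) u v -> connect (dadjQ Q') u v.
Proof.
move=> HQ u v H; apply: (@connect_rmap _ _ _ _ predT id) H _ => // x y /existsP [g /andP [gQ Hg]] _.
by split=> //; apply/existsP; exists g; rewrite Hg HQ.
Qed.

Lemma first_step (T : finType) (R : rel T) x y : connect R x y -> x != y ->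
  exists z, R x z /\ connect R z y.
Proof.
case/connectP => [[|z p]] /= Hp Hy; first by rewrite Hy eqxx.
case/andP: Hp => H1 H2 _; exists z; split => //; apply/connectP; by exists p.
Qed.

Section Split.
Variables (X : stree Sigma) (e : sE X) (s w : sV X).
Hypothesis conn : forall u v : sV X, connect (@uadj _ X) u v.
Hypothesis cnt : #|sE X| + 1 = #|sV X|.
Hypothesis He : ((ssrc e == s) && (stgt e == w)) || ((ssrc e == w) && (stgt e == s)).

Definition Qe := [set~ e].
Definition A := comp Qe s.
Definition B := comp Qe w.
Definition EA := [set f in Qe | ssrc f \in A].
Definition EB := [set f in Qe | ssrc f \in B].

Lemma sA : s \in A. Proof. by rewrite inE connect0. Qed.
Lemma wB : w \in B. Proof. by rewrite inE connect0. Qed.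

Lemma uadj_cases u v : uadj u v -> adjQ Qe u v \/ ((u == s) && (v == w) || (u == w) && (v == s)).
Proof.
rewrite uadj_adjQ => /adjQP [g _ Hg]; case: (eqVneq g e) => [ge|ge].
  subst g; right.
  case/orP: He => /andP [/eqP H1 /eqP H2]; case/orP: Hg => /andP [/eqP H3 /eqP H4];
    by rewrite -H1 -H2 -H3 -H4 !eqxx ?orbT.
left; apply/adjQP; exists g => //; by rewrite !inE.
Qed.

Lemma allA : w \in A -> forall v, v \in A.
Proof.
move=> wA v; apply: (@connect_fwd _ (@uadj _ X) (fun z => z \in A) s v) _ (conn s v) sA.
move=> x y /uadj_cases [H|H] xA; first exact: comp_closed xA H.
by case/orP: H => /andP [_ /eqP ->]; rewrite ?wA ?sA.
Qed.

Lemma cardQe : #|Qe| + 1 = #|sE X|.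
Proof. by rewrite /Qe -(cardsC [set e]) cards1 addnC. Qed.

Lemma wnA : w \notin A.
Proof.
apply/negP => /allA HA.
have h1 : #|A| <= #|EA| + 1 := comp_card Qe s.
have h2 : #|[set: sV X]| <= #|A| by apply: subset_leq_card; apply/subsetP => v _; exact: HA.
have h3 : #|EA| <= #|Qe| by apply: subset_leq_card; apply/subsetP => f; rewrite inE => /andP [].
move: h2; rewrite cardsT; have := cardQe; lia.
Qed.

Lemma sw : s != w.
Proof. by apply/eqP => H; move: wnA; rewrite -H sA. Qed.

Lemma coverAB v : (v \in A) || (v \in B).
Proof.
have H0 := @connect_fwd _ (@uadj _ X) (fun z => (z \in A) || (z \in B)) s v.
apply: H0; [|exact: conn|by rewrite sA].
move=> x y /uadj_cases [H|H] /orP [xA|xB].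
- by rewrite (comp_closed xA H).
- by rewrite (comp_closed xB H) orbT.
- by case/orP: H => /andP [_ /eqP ->]; rewrite ?sA ?wB ?orbT.
- by case/orP: H => /andP [_ /eqP ->]; rewrite ?sA ?wB ?orbT.
Qed.

Lemma disjAB v : v \in A -> v \in B -> False.
Proof.
move=> vA vB; move/negP: wnA; apply.
move: vA vB; rewrite !inE => H1 H2; apply: connect_trans H1 _.
by rewrite (sym_connect_sym (@adjQ_sym _ Qe)).
Qed.

Lemma EA_end f : f \in EA -> (ssrc f \in A) && (stgt f \in A).
Proof.
rewrite inE => /andP [fQ fA]; rewrite fA /=; apply: comp_closed fA _.
by apply/adjQP; exists f; rewrite ?eqxx.
Qed.
Lemma EB_end f : f \in EB -> (ssrc f \in B) && (stgt f \in B).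
Proof.
rewrite inE => /andP [fQ fA]; rewrite fA /=; apply: comp_closed fA _.
by apply/adjQP; exists f; rewrite ?eqxx.
Qed.

Lemma edge_cases f : f != e -> (f \in EA) || (f \in EB).
Proof. by move=> fe; have := coverAB (ssrc f); rewrite /EA /EB /Qe !inE fe /=. Qed.

Lemma eA : e \notin EA. Proof. by rewrite /EA /Qe !inE eqxx. Qed.
Lemma EBnA f : f \in EB -> f \notin EA.
Proof.
move=> fB; apply/negP => fA; case/andP: (EA_end fA) => H _.
by case/andP: (EB_end fB) => H' _; apply: disjAB H H'.
Qed.
Lemma EBne f : f \in EB -> f != e.
Proof. by rewrite /EB /Qe !inE => /andP []. Qed.

Lemma cardsAB : [/\ #|A| = #|EA| + 1, #|B| = #|EB| + 1 & #|sE X| = #|EA| + #|EB| + 1].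
Proof.
have hA : #|A| <= #|EA| + 1 := comp_card Qe s.
have hB : #|B| <= #|EB| + 1 := comp_card Qe w.
have U : A :|: B = setT by apply/setP => v; rewrite in_setU coverAB in_setT.
have I : A :&: B = set0.
  by apply/setP => v; rewrite in_setI in_set0; apply/negbTE/negP => /andP [H1 H2]; apply: disjAB H1 H2.
have UE : EA :|: EB = Qe.
  apply/setP => f; rewrite in_setU; apply/idP/idP.
    by case/orP; rewrite /EA /EB in_set => /andP [].
  by rewrite /Qe in_setC1 => /edge_cases.
have IE : EA :&: EB = set0.
  apply/setP => f; rewrite in_setI in_set0; apply/negbTE/negP => /andP [H1 H2].
  by move/negP: (EBnA H2).
have := cardsUI A B; rewrite U I cards0 cardsT.
have := cardsUI EA EB; rewrite UE IE cards0.
have := cardQe.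
split; lia.
Qed.

Lemma connA v : v \in A -> connect (adjQ EA) s v.
Proof.
move=> vA; have := vA; rewrite inE => H.
apply: (@connect_rmap _ _ _ _ (fun z => z \in A) id) H sA.
move=> x y Hxy xA; have yA := comp_closed xA Hxy; split => //.
case/adjQP: Hxy => g gQ Hg; apply/adjQP; exists g => //.
by rewrite /EA inE gQ /=; case/orP: Hg => /andP [/eqP -> _].
Qed.
Lemma connB v : v \in B -> connect (adjQ EB) w v.
Proof.
move=> vA; have := vA; rewrite inE => H.
apply: (@connect_rmap _ _ _ _ (fun z => z \in B) id) H wB.
move=> x y Hxy xA; have yA := comp_closed xA Hxy; split => //.
case/adjQP: Hxy => g gQ Hg; apply/adjQP; exists g => //.
by rewrite /EB inE gQ /=; case/orP: Hg => /andP [/eqP -> _].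
Qed.

End Split.

Lemma base_iso Y (e : sE Y) : #|sE Y| = 1 -> #|sV Y| = 2 -> ssrc e = sst Y -> stgt e = sen Y ->
  sst Y != sen Y -> iso Y (base_tree (slab e)).
Proof.
move=> cE cV hs ht hne; apply: iso_sym.
refine (@iso_inj (base_tree (slab e)) Y (fun b : bool => if b then sen Y else sst Y) (fun _ => e) _ _ _ _ _).
- by split=> * /=.
- case; case => //= /eqP; by rewrite ?(negbTE hne) // eq_sym (negbTE hne).
- by case; case.
- by rewrite cV /= card_bool.
- by rewrite cE /= card_unit.
Qed.

Lemma triv_iso Y : #|sE Y| = 0 -> #|sV Y| = 1 -> iso Y (trivial_tree Sigma).
Proof.
move=> cE cV; apply: iso_sym.
have eq1 : forall u v : sV Y, u = v.
  move=> u v; have /fintype_le1P H : #|sV Y| <= 1 by rewrite cV.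
  by rewrite (H u v).
refine (@iso_inj (trivial_tree Sigma) Y (fun _ => sst Y) (fun x => match x with end) _ _ _ _ _).
- by split=> // -[].
- by case; case.
- by case.
- by rewrite cV /= card_unit.
- by rewrite cE.
Qed.

Definition reroot X (a b : sV X) : stree Sigma := STree (sV X) (sE X) ssrc stgt slab a b.
Arguments reroot : clear implicits.

Lemma reroot_pruned X a b : (sst X == a) || (sst X == b) -> (sen X == a) || (sen X == b) ->
  pruned X -> pruned (reroot X a b).
Proof.
move=> ha hb prX r.
have [Hs Ht Hl Hst Hen] := r_morph r.
have fx : forall v, (v == a) || (v == b) -> rV r v = v.
  by move=> v /orP [] /eqP ->; [exact: Hst|exact: Hen].
have Hm : @is_morph _ X X (rV r) (rE r) by split => //; apply: fx.
exact: (prX (@Retraction _ X (rV r) (rE r) Hm (rV_idem r) (rE_idem r))).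
Qed.


Theorem main_ind n : forall X : stree Sigma, 2 * #|sE X| + (sst X == sen X) < n ->
  is_tree X -> pruned X -> generated X.
Proof.
elim: n => [//|n IH] X hm [conn cnt dp] prX.
case: (posnP #|sE X|) => [E0|Epos].
  by apply: gen_one; apply: triv_iso => //; rewrite -cnt E0.
case: (eqVneq (sst X) (sen X)) => [st|st].
- have [v vs] : exists v, v != sst X.
    case: (pickP (fun v => v != sst X)) => [v Hv|none]; first by exists v.
    have : #|[set: sV X]| <= #|[set sst X]|.
      apply: subset_leq_card; apply/subsetP => v _; rewrite inE.
      by move: (none v) => /= /negbFE.
    by rewrite cardsT cards1 -cnt; lia.
  have nv : sst X != v by rewrite eq_sym.
  have [z [Hz _]] := first_step (conn (sst X) v) nv.
  rewrite uadj_adjQ in Hz; case/adjQP: Hz => e _ He.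
  have szne := sw conn cnt He.
  have hm' : 2 * #|sE X| < n by move: hm; rewrite st eqxx /=; lia.
  case/orP: He => /andP [/eqP Hs /eqP Ht].
  + apply: (@gen_plus_iso X (reroot X (sst X) z)).
    * apply: IH.
      - by rewrite /= (negbTE szne) addn0.
      - split => //; apply: connect1; apply/existsP; exists e; by rewrite Hs Ht !eqxx.
      - by apply: reroot_pruned => //; rewrite ?eqxx // st eqxx.
    * exact: prX.
    * refine (@iso_inj X (plus_tree (reroot X (sst X) z)) (fun v => v) (fun e => e) _ _ _ _ _) => //.
  + apply: (@gen_star_iso X (reroot X z (sst X))).
    * apply: IH.
      - by rewrite /= eq_sym (negbTE szne) addn0.
      - split => //; apply: connect1; apply/existsP; exists e; by rewrite Hs Ht !eqxx.
      - by apply: reroot_pruned => //; rewrite ?eqxx ?orbT // st eqxx orbT.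
    * exact: prX.
    * refine (@iso_inj X (star_tree (reroot X z (sst X))) (fun v => v) (fun e => e) _ _ _ _ _) => //.
- have [z [Hz dz]] := first_step dp st.
  case/existsP: Hz => e /andP [/eqP Hs /eqP Ht].
  have He : (ssrc e == sst X) && (stgt e == z) || (ssrc e == z) && (stgt e == sst X).
    by rewrite Hs Ht !eqxx.
  have [cA cB cE] := cardsAB conn cnt He.
  have szne := sw conn cnt He.
  have hm' : 2 * #|sE X| < n.+1 by move: hm; rewrite (negbTE st) addn0.
  have sB : sst X \notin B e z by apply/negP => H; apply: (disjAB conn cnt He (sA e _) H).
  have tB : sen X \in B e z.
    have H0 := @connect_fwd _ (@dadj _ X) (fun v => v \in B e z) z (sen X).
    apply: H0; [|exact: dz|exact: wB].
    move=> x y /existsP [g /andP [/eqP gs /eqP gt]] xB.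
    have gne : g != e by apply/eqP => ge; move: xB; rewrite -gs ge Hs (negbTE sB).
    apply: comp_closed xB _; apply/adjQP; exists g; first by rewrite /Qe in_setC1.
    by rewrite gs gt !eqxx.
  have dpB : connect (dadjQ (EB e z)) z (sen X).
    have H0 := @connect_rmap _ _ (@dadj _ X) (dadjQ (EB e z)) (fun v => v \in B e z) id z (sen X).
    apply: H0; [|exact: dz|exact: wB].
    move=> x y /existsP [g /andP [/eqP gs /eqP gt]] xB.
    have gne : g != e by apply/eqP => ge; move: xB; rewrite -gs ge Hs (negbTE sB).
    have gB : g \in EB e z by rewrite /EB in_set /Qe in_setC1 gne gs.
    split; last by apply/existsP; exists g; rewrite gB gs gt !eqxx.
    by case/andP: (EB_end gB); rewrite gt.
  have de : dadjQ [set e] (sst X) z by apply/existsP; exists e; rewrite set11 Hs Ht !eqxx.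
  case: (posnP #|EA e (sst X)|) => [EA0|EApos].
  + (* cut at z *)
    have hs2 : sst X \in z |: A e (sst X) by rewrite in_setU1 sA orbT.
    have c1 : z \in z |: A e (sst X) := setU11 _ _.
    have c2 : z \in B e z := wB _ _.
    have cover : forall v, (v \in z |: A e (sst X)) || (v \in B e z).
      by move=> v; rewrite in_setU1 -orbA (coverAB conn He v) orbT.
    have inter : forall v, v \in z |: A e (sst X) -> v \in B e z -> v = z.
      move=> v; rewrite in_setU1 => /orP [/eqP //|vA] vB; exfalso.
      exact: (disjAB conn cnt He vA vB).
    have HQ1 : forall f, f \in e |: EA e (sst X) ->
        (ssrc f \in z |: A e (sst X)) && (stgt f \in z |: A e (sst X)).
      move=> f; rewrite in_setU1 => /orP [/eqP ->|fA].
        by rewrite !in_setU1 Hs Ht eqxx sA !orbT.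
      by case/andP: (EA_end fA) => H1 H2; rewrite !in_setU1 H1 H2 !orbT.
    have HQ2 : forall f, f \in ~: (e |: EA e (sst X)) -> (ssrc f \in B e z) && (stgt f \in B e z).
      move=> f; rewrite in_setC in_setU1 negb_or => /andP [fe fnA].
      case/orP: (edge_cases conn He fe) => [fA|fB]; first by rewrite fA in fnA.
      exact: EB_end.
    have subEB : {subset EB e z <= ~: (e |: EA e (sst X))}.
      move=> f fB; rewrite in_setC in_setU1 negb_or (EBne fB).
      exact: (EBnA conn cnt He fB).
    apply: (gen_mul_iso _ _ prX (cut_iso hs2 tB c1 c2 cover inter HQ1 HQ2)).
    * apply: (@gen_base _ (slab e)).
      pose e' : sE (X1 (e |: EA e (sst X)) z hs2) := exist _ e (setU11 e _).
      apply: (@base_iso _ e').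
      - by rewrite /X1 sub_cardE cardsU1 (eA e (sst X)) EA0.
      - by rewrite /X1 sub_cardV cardsU1 (wnA conn cnt He) cA EA0.
      - by apply: val_inj; rewrite (sub_src HQ1); exact: Hs.
      - have Hz1 : val (sen (X1 (e |: EA e (sst X)) z hs2)) = z := insubdK _ c1.
        by apply: val_inj; rewrite (sub_tgt HQ1) Hz1; exact: Ht.
      - have Hz1 : val (sen (X1 (e |: EA e (sst X)) z hs2)) = z := insubdK _ c1.
        apply/eqP => /(congr1 val); rewrite Hz1 => H; have H' : sst X = z := H.
        by move: szne; rewrite H' eqxx.
    * have E1 : #|~: (e |: EA e (sst X))| = #|EB e z|.
        have := cardsC (e |: EA e (sst X)); rewrite cardsU1 (eA e (sst X)) EA0 cE EA0.
        clear; lia.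
      have hmE : 2 * #|EB e z| + 2 <= n by rewrite cE EA0 in hm'; clear -hm'; lia.
      apply: IH.
      - rewrite /X2 sub_cardE E1; case: (_ == _) => /=; clear -hmE; lia.
      - split.
        + apply: (sub_conn HQ2 c2) => v vB. apply: (adjQ_mono subEB). exact: connB vB.
        + by rewrite /X2 sub_cardE sub_cardV cB E1.
        + exact: (sub_dpath c2 HQ2 (dadjQ_mono subEB dpB)).
      - exact: (cut_pruned2 hs2 tB inter HQ1 HQ2 prX).
  + (* cut at sst X *)
    have hs1 : sst X \in A e (sst X) := sA _ _.
    have ht1 : sen X \in sst X |: B e z by rewrite in_setU1 tB orbT.
    have c2 : sst X \in sst X |: B e z := setU11 _ _.
    have cover : forall v, (v \in A e (sst X)) || (v \in sst X |: B e z).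
      by move=> v; rewrite in_setU1 orbCA (coverAB conn He v) orbT.
    have inter : forall v, v \in A e (sst X) -> v \in sst X |: B e z -> v = sst X.
      move=> v vA; rewrite in_setU1 => /orP [/eqP //|vB]; exfalso.
      exact: (disjAB conn cnt He vA vB).
    have HQ1 : forall f, f \in EA e (sst X) ->
        (ssrc f \in A e (sst X)) && (stgt f \in A e (sst X)) := fun f H => EA_end H.
    have HQ2 : forall f, f \in ~: EA e (sst X) ->
        (ssrc f \in sst X |: B e z) && (stgt f \in sst X |: B e z).
      move=> f; rewrite in_setC => fnA.
      case: (eqVneq f e) => [->|fe]; first by rewrite !in_setU1 Hs Ht eqxx wB !orbT.
      case/orP: (edge_cases conn He fe) => [fA|fB]; first by rewrite fA in fnA.
      by case/andP: (EB_end fB) => H1 H2; rewrite !in_setU1 H1 H2 !orbT.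
    have subEB : {subset EB e z <= ~: EA e (sst X)}.
      by move=> f fB; rewrite in_setC (EBnA conn cnt He fB).
    have eEA : e \in ~: EA e (sst X) by rewrite in_setC eA.
    apply: (gen_mul_iso _ _ prX (cut_iso hs1 ht1 hs1 c2 cover inter HQ1 HQ2)).
    * have hmA : 2 * #|EA e (sst X)| + 2 <= n by rewrite cE in hm'; clear -hm'; lia.
      apply: IH.
      - rewrite /X1 sub_cardE; case: (_ == _) => /=; clear -hmA; lia.
      - split.
        + apply: (sub_conn HQ1 hs1) => v vA; exact: connA vA.
        + by rewrite /X1 sub_cardE sub_cardV cA.
        + exact: (sub_dpath hs1 HQ1 (connect0 _ _)).
      - exact: (cut_pruned1 ht1 hs1 inter HQ1 HQ2 prX).
    * have E2 : #|~: EA e (sst X)| = #|EB e z| + 1.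
        have := cardsC (EA e (sst X)); rewrite cE; clear; lia.
      have hmB : 2 * #|EB e z| + 4 <= n by rewrite cE in hm'; clear -hm' EApos; lia.
      apply: IH.
      - rewrite /X2 sub_cardE E2; case: (_ == _) => /=; clear -hmB; lia.
      - split.
        + apply: (sub_conn HQ2 c2) => v; rewrite in_setU1 => /orP [/eqP ->|vB].
            exact: connect0.
          apply: connect_trans (adjQ_mono subEB (connB vB)).
          apply: connect1; apply/adjQP; exists e => //; by rewrite Hs Ht !eqxx.
        + by rewrite /X2 sub_cardE sub_cardV cardsU1 sB cB E2 addnC.
        + apply: (sub_dpath c2 HQ2).
          apply: connect_trans (dadjQ_mono subEB dpB).
          apply: connect1; apply/existsP; exists e; by rewrite eEA Hs Ht !eqxx.
      - exact: (cut_pruned2 hs1 ht1 inter HQ1 HQ2 prX).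
Qed.

End Proof.

Theorem proposition5p1 (Sigma : Type) (X : stree Sigma) :
  is_tree X -> pruned X -> generated X.
Proof.
apply: (@main_ind Sigma (2 * #|sE X| + 2) X).
have := leq_b1 (sst X == sen X); lia.
Qed.
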